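(* Let $\mathcal{A}=(A_n)_{n\in\mathbb{N}}$ be a symmetric van Hove averaging sequence in $\mathbb{R}^d$, let $f\in C_{\mathsf{u}}(\mathbb{R}^d)$, let $k\in\mathbb{R}^d$ and $\chi_k(x)=e^{2\pi i kx}$. Then, with respect to $\mathcal{A}$, the following are equivalent: (1) the Fourier–Bohr coefficient $c_f(k)$ exists; (2) the Eberlein convolution $\chi_k\circledast f$ exists; (3) there is some $x\in\mathbb{R}^d$ such that $\lim_{n\to\infty}\frac{1}{\mathrm{vol}(A_n)}\int_{A_n}\chi_k(x-t)f(t)\,\mathrm{d}t$ exists. Moreover, if $c_f(k)$ exists, then $(\chi_k\circledast f)(x)=\chi_k(x)\,c_f(k)$ for all $x\in\mathbb{R}^d$.
   Context: $C_{\mathsf{u}}(\mathbb{R}^d)$ is the space of bounded uniformly continuous complex functions on $\mathbb{R}^d$. An averaging sequence is a sequence $(A_n)$ of compact sets with $A_n\subset A_{n+1}^{\circ}$ and $\bigcup_nA_n=\mathbb{R}^d$; it is symmetric if $A_n=-A_n$ for all $n$, and van Hove if $\lim_n\mathrm{vol}(\partial^KA_n)/\mathrm{vol}(A_n)=0$ for every compact $K$, where $\partial^K C=((C+K)\setminus C^{\circ})\cup((\overline{\mathbb{R}^d\setminus C}-K)\cap C)$. The Eberlein convolution of $g,f\in C_{\mathsf{u}}(\mathbb{R}^d)$ along $\mathcal{A}$ is $(g\circledast f)(x)=\lim_n\frac{1}{\mathrm{vol}(A_n)}\int_{A_n}g(x-t)f(t)\,\mathrm{d}t$, said to exist if the limit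 exists for every $x$. The Fourier–Bohr coefficient of $f$ at $k$ with respect to $\mathcal{A}$ is $c_f(k)=\lim_n\frac{1}{\mathrm{vol}(A_n)}\int_{A_n}e^{-2\pi i kx}f(x)\,\mathrm{d}x$, when the limit exists. *)

(* Defs.v *)
From HB Require Import structures.
From mathcomp Require Import all_boot all_order all_algebra.
From mathcomp Require Import all_classical all_reals all_analysis.
From mathcomp Require Import complex.
Import Order.TTheory GRing.Theory Num.Theory.
Import ComplexField.
Import numFieldNormedType.Exports numFieldTopology.Exports.

Set Implicit Arguments.
Unset Strict Implicit.
Unset Printing Implicit Defensive.

Local Open Scope classical_set_scope.
Local Open Scope ring_scope.
Local Open Scope complex_scope.

(* R^(n+1) is first built as the iterated product measurable space           *)
(* ((R * R) * ... ) * R carrying the iterated library product measure of     *)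
(* the library's 1-dimensional Lebesgue measure; it is then transported to   *)
(* the row vectors 'rV[R]_(n+1) through the coordinate bijection toRV.       *)

Definition dispOf {d : measure_display} (T : measurableType d) := d.

Fixpoint dispR (R : realType) (n : nat) : measure_display :=
  match n with
  | 0 => dispOf (measurableTypeR R : measurableType _)
  | n.+1 => measure_prod_display (dispR R n, dispOf (measurableTypeR R : measurableType _))
  end.

Fixpoint mR (R : realType) (n : nat) : measurableType (dispR R n) :=
  match n return measurableType (dispR R n) with
  | 0 => measurableTypeR R
  | n.+1 => ((mR R n) * measurableTypeR R)%type
  end.

Fixpoint lebR (R : realType) (n : nat) : {measure set (mR R n) -> \bar R} :=
  match n return {measure set (mR R n) -> \bar R} with
  | 0 => (@lebesgue_measure R : {measure set _ -> \bar R})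
  | n.+1 => (((lebR R n) \x (@lebesgue_measure R))%E : {measure set _ -> \bar R})
  end.

Fixpoint coordR (R : realType) (n : nat) : mR R n -> nat -> R :=
  match n return mR R n -> nat -> R with
  | 0 => fun x _ => x
  | n.+1 => fun p i => if (i <= n)%N then coordR p.1 i else p.2
  end.

Definition toRV (R : realType) (n : nat) (x : mR R n) : 'rV[R]_n.+1 :=
  \row_(j < n.+1) coordR x j.

(* d-dimensional Lebesgue measure on 'rV[R]_d (for d = 0, R^0 is a point and
   its Lebesgue measure is the unit point mass). *)
Definition vol (R : realType) (d : nat) : set 'rV[R]_d -> \bar R :=
  match d return set 'rV[R]_d -> \bar R with
  | 0 => fun A => if `[< A (0 : 'rV[R]_0) >] then 1%E else 0%E
  | n.+1 => fun A => lebR R n (@toRV R n @^-1` A)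
  end.

Definition Rint (R : realType) (d : nat) : set 'rV[R]_d -> ('rV[R]_d -> R) -> R :=
  match d return set 'rV[R]_d -> ('rV[R]_d -> R) -> R with
  | 0 => fun A g => if `[< A 0 >] then g 0 else 0
  | n.+1 => fun A g => Rintegral (lebR R n) (@toRV R n @^-1` A) (g \o @toRV R n)
  end.

Definition Cint (R : realType) (d : nat) (A : set 'rV[R]_d) (g : 'rV[R]_d -> R[i])
  : R[i] :=
  (Rint A (fun x => complex.Re (g x))) +i* (Rint A (fun x => complex.Im (g x))).

Definition avg (R : realType) (d : nat) (A : set 'rV[R]_d) (g : 'rV[R]_d -> R[i])
  : R[i] :=
  ((fine (vol A))%:C)^-1 * Cint A g.

Definition averaging_seq (R : realType) (d : nat) (A : nat -> set 'rV[R]_d) : Prop :=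
  (forall n, compact (A n)) /\
  (forall n, A n `<=` interior (A n.+1)) /\
  \bigcup_n A n = setT.

Definition symmetric_seq (R : realType) (d : nat) (A : nat -> set 'rV[R]_d) : Prop :=
  forall n, [set - x | x in A n] = A n.

Definition Kboundary (R : realType) (d : nat) (K C : set 'rV[R]_d) : set 'rV[R]_d :=
  ([set c + k | c in C & k in K] `\` interior C) `|`
  ([set y - k | y in closure (~` C) & k in K] `&` C).

Definition van_Hove (R : realType) (d : nat) (A : nat -> set 'rV[R]_d) : Prop :=
  forall K : set 'rV[R]_d, compact K ->
    (fun n => fine (vol (Kboundary K (A n))) / fine (vol (A n))) @ \oo --> (0 : R).

Definition Cu (R : realType) (d : nat) (f : 'rV[R]_d -> R[i]) : Prop :=
  (exists M : R, forall x, Normc.normc (f x) <= M) /\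
  unif_continuous (f : 'rV[R]_d -> R[i]^o).

Definition dotp (R : realType) (d : nat) (k x : 'rV[R]_d) : R :=
  \sum_(j < d) k 0 j * x 0 j.

Definition e2pi (R : realType) (t : R) : R[i] :=
  (cos (2 * pi * t)) +i* (sin (2 * pi * t)).

Definition chi (R : realType) (d : nat) (k : 'rV[R]_d) (x : 'rV[R]_d) : R[i] :=
  e2pi (dotp k x).

Definition is_FB_coeff (R : realType) (d : nat) (A : nat -> set 'rV[R]_d)
  (f : 'rV[R]_d -> R[i]) (k : 'rV[R]_d) (c : R[i]) : Prop :=
  ((fun n => avg (A n) (fun x => e2pi (- dotp k x) * f x)) : nat -> R[i]^o)
    @ \oo --> (c : R[i]^o).

Definition FB_coeff_exists (R : realType) (d : nat) (A : nat -> set 'rV[R]_d)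
  (f : 'rV[R]_d -> R[i]) (k : 'rV[R]_d) : Prop :=
  exists c, is_FB_coeff A f k c.

Definition is_eberlein_at (R : realType) (d : nat) (A : nat -> set 'rV[R]_d)
  (g f : 'rV[R]_d -> R[i]) (x : 'rV[R]_d) (v : R[i]) : Prop :=
  ((fun n => avg (A n) (fun t => g (x - t) * f t)) : nat -> R[i]^o)
    @ \oo --> (v : R[i]^o).

Definition eberlein_exists_at (R : realType) (d : nat) (A : nat -> set 'rV[R]_d)
  (g f : 'rV[R]_d -> R[i]) (x : 'rV[R]_d) : Prop :=
  exists v, is_eberlein_at A g f x v.

Definition eberlein_exists (R : realType) (d : nat) (A : nat -> set 'rV[R]_d)
  (g f : 'rV[R]_d -> R[i]) : Prop :=
  forall x, eberlein_exists_at A g f x.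

(* Main.v *)
Require Import Defs.
From HB Require Import structures.
From mathcomp Require Import all_boot all_order all_algebra.
From mathcomp Require Import all_classical all_reals all_analysis.
From mathcomp Require Import complex measurable_realfun.
From mathcomp Require Import ring lra.
Import Order.TTheory GRing.Theory Num.Theory.
Import ComplexField.
Import numFieldNormedType.Exports numFieldTopology.Exports.
Local Open Scope classical_set_scope.
Local Open Scope ring_scope.

Set Implicit Arguments.
Unset Strict Implicit.
Unset Printing Implicit Defensive.

Section S.
Variable R : realType.

Lemma coordRS n (q : mR R n) (y : R) j :
  coordR (n:=n.+1) (q, y) j = if (j <= n)%N then coordR q j else y.
Proof. by []. Qed.

Definition boxR (n : nat) (a b : nat -> R) : set (mR R n) :=
  [set q | forall j, (j <= n)%N -> a j < coordR q j < b j].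
Arguments boxR : clear implicits.

Lemma measurable_boxR n a b : measurable (boxR n a b).
Proof.
elim: n a b => [|n IH] a b.
  have -> : boxR 0 a b = `]a 0%N, b 0%N[%classic.
    apply/seteqP; split => x /=.
      by move/(_ 0%N (leqnn _)); rewrite in_itv.
    by rewrite in_itv /= => h j; rewrite leqn0 => /eqP ->.
  exact: measurable_itv.
have -> : boxR n.+1 a b = (boxR n a b) `*` `]a n.+1, b n.+1[%classic.
  apply/seteqP; split => -[q y] /=.
    move=> h; split.
      by move=> j jn; have := h j (leqW jn); rewrite coordRS jn.
    by have := h n.+1 (leqnn _); rewrite coordRS ltnn in_itv.
  move=> [h1]; rewrite in_itv /= => h2 j; rewrite coordRS; case: ifP => jn jn1; first exact: h1.
  have -> : j = n.+1 by apply/eqP; rewrite eqn_leq jn1 ltnNge jn.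
  done.
have := measurableX (IH a b) (measurable_itv `]a n.+1, b n.+1[). move=> hh; exact hh.
Qed.

Lemma ball_rV n (x y : 'rV[R]_n) e : 0 < e -> (forall j, `|x 0 j - y 0 j| < e) -> ball x e y.
Proof.
move=> e0 h; rewrite /ball /=; split => // i j.
by rewrite ord1 /ball /=.
Qed.

Lemma ball_rV_inv n (x y : 'rV[R]_n) e : ball x e y -> forall j, `|x 0 j - y 0 j| < e.
Proof. by case => _ h j; have := h 0 j. Qed.

Lemma toRVE n (q : mR R n) (j : 'I_n.+1) : toRV q 0 j = coordR q j.
Proof. by rewrite mxE. Qed.

Lemma open_measurable_rV n (U : set 'rV[R]_n.+1) : open U ->
  measurable (@toRV R n @^-1` U).
Proof.
move=> oU.
pose a (sr : seq rat * rat) := fun j => ratr (nth 0 sr.1 j) - ratr sr.2 : R.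
pose b (sr : seq rat * rat) := fun j => ratr (nth 0 sr.1 j) + ratr sr.2 : R.
pose F (sr : seq rat * rat) := if `[< boxR n (a sr) (b sr) `<=` @toRV R n @^-1` U >]
  then boxR n (a sr) (b sr) else set0.
have -> : @toRV R n @^-1` U = \bigcup_i F i.
  apply/seteqP; split; last first.
    move=> q [i _]; rewrite /F; case: asboolP => [sub|_] //; exact: sub.
  move=> q Uq.
  have : nbhs (toRV q) U by exact: oU.
  move=> /nbhs_ballP [e e0 sub].
  have e20 : 0 < e / 2 by rewrite divr_gt0.
  have [r] := rat_in_itvoo e20; rewrite in_itv /= => /andP[r0 re].
  have hs : forall j, exists s : rat, ratr s \in `](coordR q j - ratr r), (coordR q j + ratr r)[.
    move=> j; apply: rat_in_itvoo; rewrite ltrBlDr -addrA ltrDl; exact: addr_gt0.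
  have [phi hphi] := boolp.choice hs.
  exists (mkseq phi n.+1, r) => //.
  have qbox : boxR n (a (mkseq phi n.+1, r)) (b (mkseq phi n.+1, r)) q.
    move=> j jn; rewrite /a /b /= nth_mkseq //.
    move: (hphi j); rewrite !in_itv /= => /andP[h1 h2].
    by apply/andP; split; lra.
  rewrite /F; case: asboolP => // -[].
  move=> q' hq'; apply: sub; apply: ball_rV => // j.
  rewrite !toRVE.
  have jn : (j <= n)%N by rewrite -ltnS.
  move: (qbox j jn) (hq' j jn); rewrite /a /b /= nth_mkseq //.
  move=> /andP[h1 h2] /andP[h3 h4].
  rewrite ltr_norml; apply/andP; split.
    lra.
  lra.
apply: countable_bigcupT_measurable; first exact: countableP.
move=> i; rewrite /F; case: asboolP => _; [exact: measurable_boxR|exact: measurable0].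
Qed.

Lemma continuous_measurable_rV n (h : 'rV[R]_n.+1 -> R) : continuous h ->
  measurable_fun setT (h \o @toRV R n).
Proof.
move=> /continuousP ch; apply: (measurability _ (RGenOpens.measurableE R)).
move=> _ [_ [x [y ->]] <-]; rewrite setTI.
have -> : (h \o @toRV R n) @^-1` `]x, y[%classic = @toRV R n @^-1` (h @^-1` `]x, y[%classic) by [].
apply: open_measurable_rV; apply: ch; exact: interval_open.
Qed.

Lemma compact_measurable_rV n (S : set 'rV[R]_n.+1) : compact S ->
  measurable (@toRV R n @^-1` S).
Proof.
move=> cS.
have clS : closed S by apply: compact_closed => //.
have -> : @toRV R n @^-1` S = ~` (@toRV R n @^-1` (~` S)) by rewrite preimage_setC setCK.
apply: measurableC; apply: open_measurable_rV; exact: closed_openC.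
Qed.

Lemma leb_itv_fin (x y : R) : (@lebesgue_measure R `]x, y[%classic < +oo)%E.
Proof. rewrite lebesgue_measure_itv; case: ifP => _ //; exact: ltry. Qed.

Lemma lebR_boxR n a b : (lebR R n (boxR n a b) < +oo)%E.
Proof.
elim: n a b => [|n IH] a b.
  have -> : boxR 0 a b = `]a 0%N, b 0%N[%classic.
    apply/seteqP; split => x /=.
      by move/(_ 0%N (leqnn _)); rewrite in_itv.
    by rewrite in_itv /= => h j; rewrite leqn0 => /eqP ->.
  exact: leb_itv_fin.
have -> : boxR n.+1 a b = (boxR n a b) `*` `]a n.+1, b n.+1[%classic.
  apply/seteqP; split => -[q y] /=.
    move=> h; split.
      by move=> j jn; have := h j (leqW jn); rewrite coordRS jn.
    by have := h n.+1 (leqnn _); rewrite coordRS ltnn in_itv.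
  move=> [h1]; rewrite in_itv /= => h2 j; rewrite coordRS; case: ifP => jn jn1; first exact: h1.
  have -> : j = n.+1 by apply/eqP; rewrite eqn_leq jn1 ltnNge jn.
  done.
rewrite /= product_measure1E; last 2 first.
- exact: measurable_boxR.
- exact: measurable_itv.
apply: lte_mul_pinfty.
- exact: measure_ge0.
- rewrite ge0_fin_numE ?IH //; exact: measure_ge0.
  exact: leb_itv_fin.
Qed.

Lemma entry_le_norm n (v : 'rV[R]_n) j : `|v 0 j| <= `|v|.
Proof.
rewrite [X in _ <= X]/Num.norm /= mx_normrE.
exact: (le_bigmax _ (fun ij : 'I_1 * 'I_n => `|v ij.1 ij.2|) (0, j)).
Qed.

Lemma compact_finite_rV n (S : set 'rV[R]_n.+1) : compact S ->
  (lebR R n (@toRV R n @^-1` S) < +oo)%E.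
Proof.
move=> cS; have [M [_ hM]] := compact_bounded cS.
have hB := hM (`|M| + 1) (ltr_pwDr ltr01 (ler_norm M)).
pose B := `|M| + 1.
apply: (@le_lt_trans _ _ (lebR R n (boxR n (fun=> - (B + 1)) (fun=> B + 1)))); last first.
  exact: lebR_boxR.
apply: le_measure; rewrite ?inE; first exact: compact_measurable_rV.
  exact: measurable_boxR.
move=> q Sq j jn.
have := @entry_le_norm n.+1 (toRV q) (@Ordinal n.+1 j jn).
rewrite toRVE /= => h1; have h2 := hB _ Sq; rewrite /= -/B in h2.
have h3 := le_trans h1 h2.
rewrite ler_norml in h3; case/andP: h3 => h3 h4.
apply/andP; split; lra.
Qed.

Definition goodf d (h : 'rV[R]_d -> R) := continuous h /\ exists M, forall x, `|h x| <= M.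

Lemma integrable_good n (S : set 'rV[R]_n.+1) (h : 'rV[R]_n.+1 -> R) :
  compact S -> goodf h ->
  (lebR R n).-integrable (@toRV R n @^-1` S) (EFin \o (h \o @toRV R n)).
Proof.
move=> cS [ch [M hM]].
apply: measurable_bounded_integrable.
- exact: compact_measurable_rV.
- exact: compact_finite_rV.
- apply: (measurable_funS _ (subsetT _)) => //; exact: continuous_measurable_rV.
- exists M; split; first exact: num_real.
  move=> y My x _ /=; apply: le_trans (hM _) _; exact: ltW.
Qed.

Lemma Rint_lin d (S : set 'rV[R]_d) (h1 h2 : 'rV[R]_d -> R) (a b : R) :
  compact S -> goodf h1 -> goodf h2 ->
  Defs.Rint S (fun t => a * h1 t + b * h2 t) = a * Defs.Rint S h1 + b * Defs.Rint S h2.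
Proof.
case: d S h1 h2 => [|n] S h1 h2 cS g1 g2 /=.
  by case: ifP => _ //; rewrite !mulr0 addr0.
have mS := compact_measurable_rV cS.
have i1 := integrable_good cS g1.
have i2 := integrable_good cS g2.
have -> : (fun t => a * h1 t + b * h2 t) \o @toRV R n =
   (fun x => a * (h1 \o @toRV R n) x + b * (h2 \o @toRV R n) x) by [].
rewrite RintegralD //.
- by rewrite !RintegralZl.
- exact: (integrableZl _ _ i1).
- exact: (integrableZl _ _ i2).
Qed.

Lemma Re_sub (z w : R[i]) : complex.Re (z - w) = complex.Re z - complex.Re w.
Proof. by case: z; case: w. Qed.
Lemma Im_sub (z w : R[i]) : complex.Im (z - w) = complex.Im z - complex.Im w.
Proof. by case: z; case: w. Qed.
Lemma normc_ge_Im' (x : R[i]) : `|complex.Im x|%:C%C <= `|x|.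
Proof.
by rewrite normc_def lecR -sqrtr_sqr; apply: ler_wsqrtr; rewrite lerDr sqr_ge0.
Qed.

Lemma unif_cont_ReIm d (f : 'rV[R]_d -> R[i]) :
  unif_continuous (f : 'rV[R]_d -> R[i]^o) ->
  continuous (fun t => complex.Re (f t)) /\ continuous (fun t => complex.Im (f t)).
Proof.
move=> hf.
have key : forall x e, 0 < e -> \forall t \near x, `|f x - f t| < e%:C%C.
  move=> x e e0.
  have E : entourage [set xy : R[i]^o * R[i]^o | ball xy.1 e%:C%C xy.2].
    by rewrite -entourage_ballE; exists e%:C%C => //=; rewrite ltcR.
  have := nbhs_entourage x (hf _ E); apply: filterS => t /=.
  by rewrite /xsection /= inE.
split => x P /= /nbhs_ballP [e e0 sub]; move: (key x e e0); apply: filterS => t h;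
  apply: sub; rewrite /ball /=.
  rewrite -Re_sub -ltcR; exact: le_lt_trans (normc_ge_Re _) h.
rewrite -Im_sub -ltcR; exact: le_lt_trans (normc_ge_Im' _) h.
Qed.

Lemma dotp_cont d (k : 'rV[R]_d) : continuous (fun t : 'rV[R]_d => dotp k t).
Proof.
move=> x; rewrite /dotp.
have FF := @mx_nbhs_filter 1 d R x.
apply: (@cvg_big _ _ +%R 0 xpredT add_continuous _ _ _ _ _ FF) => j _.
apply: (@cvgM _ _ _ FF); first exact: cvg_cst.
exact: coord_continuous.
Qed.

Lemma goodM d (h1 h2 : 'rV[R]_d -> R) : goodf h1 -> goodf h2 -> goodf (fun t => h1 t * h2 t).
Proof.
move=> [c1 [M1 b1]] [c2 [M2 b2]]; split.
  move=> x; have FF := @mx_nbhs_filter 1 d R x.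
  exact: (@cvgM _ _ _ FF _ _ _ _ (c1 x) (c2 x)).
exists (M1 * M2) => x; rewrite normrM; apply: ler_pM => //.
Qed.

Lemma goodD d (h1 h2 : 'rV[R]_d -> R) : goodf h1 -> goodf h2 -> goodf (fun t => h1 t + h2 t).
Proof.
move=> [c1 [M1 b1]] [c2 [M2 b2]]; split.
  move=> x; have FF := @mx_nbhs_filter 1 d R x.
  exact: (@cvgD _ _ _ _ FF _ _ _ _ (c1 x) (c2 x)).
exists (M1 + M2) => x; apply: le_trans (ler_normD _ _) _; exact: lerD.
Qed.

Lemma goodN d (h : 'rV[R]_d -> R) : goodf h -> goodf (fun t => - h t).
Proof.
move=> [c1 [M1 b1]]; split.
  move=> x; have FF := @mx_nbhs_filter 1 d R x.
  exact: (@cvgN _ _ _ _ FF _ _ (c1 x)).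
by exists M1 => x; rewrite normrN.
Qed.

Lemma good_cos d (k : 'rV[R]_d) : goodf (fun t => cos (2 * pi * - dotp k t)).
Proof.
split; last by exists 1 => x; exact: cos_max.
move=> x; have FF := @mx_nbhs_filter 1 d R x.
apply: (@cvg_comp _ _ _ (fun t => 2 * pi * - dotp k t) cos); last exact: continuous_cos.
apply: (@cvgM _ _ _ FF); first exact: cvg_cst.
apply: (@cvgN _ _ _ _ FF); exact: dotp_cont.
Qed.

Lemma good_sin d (k : 'rV[R]_d) : goodf (fun t => sin (2 * pi * - dotp k t)).
Proof.
split; last by exists 1 => x; exact: sin_max.
move=> x; have FF := @mx_nbhs_filter 1 d R x.
apply: (@cvg_comp _ _ _ (fun t => 2 * pi * - dotp k t) sin); last exact: continuous_sin.
apply: (@cvgM _ _ _ FF); first exact: cvg_cst.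
apply: (@cvgN _ _ _ _ FF); exact: dotp_cont.
Qed.

Lemma good_f d (f : 'rV[R]_d -> R[i]) : Cu f ->
  goodf (fun t => complex.Re (f t)) /\ goodf (fun t => complex.Im (f t)).
Proof.
move=> [[M hM] uf]; have [c1 c2] := unif_cont_ReIm uf.
split; split => //; exists M => x; apply: le_trans (hM x); case: (f x) => u w /=.
  rewrite -sqrtr_sqr; apply: ler_wsqrtr; rewrite lerDl; exact: sqr_ge0.
rewrite -sqrtr_sqr; apply: ler_wsqrtr; rewrite lerDr; exact: sqr_ge0.
Qed.

Lemma good_G d (f : 'rV[R]_d -> R[i]) k : Cu f ->
  goodf (fun t => complex.Re (e2pi (- dotp k t) * f t)) /\
  goodf (fun t => complex.Im (e2pi (- dotp k t) * f t)).
Proof.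
move=> /good_f [g1 g2].
have eRe : (fun t => complex.Re (e2pi (- dotp k t) * f t)) =
  (fun t => cos (2 * pi * - dotp k t) * complex.Re (f t) + - (sin (2 * pi * - dotp k t) * complex.Im (f t))).
  by apply: funext => t; rewrite /e2pi; case: (f t) => u w.
have eIm : (fun t => complex.Im (e2pi (- dotp k t) * f t)) =
  (fun t => cos (2 * pi * - dotp k t) * complex.Im (f t) + sin (2 * pi * - dotp k t) * complex.Re (f t)).
  by apply: funext => t; rewrite /e2pi; case: (f t) => u w.
rewrite eRe eIm; split.
  apply: goodD; first exact: goodM (good_cos _) g1.
  apply: goodN; exact: goodM (good_sin _) g2.
apply: goodD; first exact: goodM (good_cos _) g2.
exact: goodM (good_sin _) g1.
Qed.

Lemma avg_scale d (S : set 'rV[R]_d) (f : 'rV[R]_d -> R[i]) k z : compact S -> Cu f ->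
  avg S (fun t => z * (e2pi (- dotp k t) * f t)) = z * avg S (fun t => e2pi (- dotp k t) * f t).
Proof.
move=> cS hf; have [gRe gIm] := good_G k hf.
rewrite /avg mulrCA; congr (_ * _); rewrite /Cint.
case: z => a b.
have eRe : (fun t => complex.Re ((a +i* b)%C * (e2pi (- dotp k t) * f t))) =
  (fun t => a * complex.Re (e2pi (- dotp k t) * f t) + (- b) * complex.Im (e2pi (- dotp k t) * f t)).
  by apply: funext => t; case: (e2pi (- dotp k t) * f t) => u w /=; rewrite mulNr.
have eIm : (fun t => complex.Im ((a +i* b)%C * (e2pi (- dotp k t) * f t))) =
  (fun t => a * complex.Im (e2pi (- dotp k t) * f t) + b * complex.Re (e2pi (- dotp k t) * f t)).
  by apply: funext => t; case: (e2pi (- dotp k t) * f t) => u w /=.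
rewrite eRe eIm !Rint_lin //.
by rewrite mulNr.
Qed.

Lemma e2piD (u v : R) : e2pi (u + v) = e2pi u * e2pi v.
Proof.
rewrite /e2pi mulrDr cosD sinD; apply/eqP; rewrite eq_complex /=.
by apply/andP; split; apply/eqP; ring.
Qed.

Lemma e2pi_neq0 (u : R) : e2pi u != 0.
Proof.
apply/negP => /eqP h.
have : cos (2 * pi * u) ^+ 2 + sin (2 * pi * u) ^+ 2 = 1 by exact: cos2Dsin2.
move: h; rewrite /e2pi => -[-> ->]; rewrite expr0n /= addr0.
by move/eqP; rewrite eq_sym oner_eq0.
Qed.

Lemma dotpB d (k x t : 'rV[R]_d) : dotp k (x - t) = dotp k x + - dotp k t.
Proof.
rewrite /dotp -sumrN -big_split /=; apply: eq_bigr => j _; rewrite !mxE; ring.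
Qed.

Lemma chi_split d (k x t : 'rV[R]_d) (f : 'rV[R]_d -> R[i]) :
  chi k (x - t) * f t = chi k x * (e2pi (- dotp k t) * f t).
Proof. by rewrite /chi dotpB e2piD mulrA. Qed.

End S.

Lemma cvg_cmul (R : realType) (u : nat -> R[i]) (a b : R[i]) :
  (u : nat -> R[i]^o) @ \oo --> (b : R[i]^o) ->
  ((fun n => a * u n) : nat -> R[i]^o) @ \oo --> (a * b : R[i]^o).
Proof. move=> h; have := @cvgMl_tmp R[i] nat \oo _ u a b h; move=> hh; apply: hh. Qed.

Unset Implicit Arguments.
Set Strict Implicit.

Theorem lemma4p1 (R : realType) (d : nat) (A : nat -> set 'rV[R]_d)
  (hA : averaging_seq A) (hsym : symmetric_seq A) (hvH : van_Hove A)
  (f : 'rV[R]_d -> R[i]) (hf : Cu f) (k : 'rV[R]_d) :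
  (FB_coeff_exists A f k <-> eberlein_exists A (chi k) f) /\
  (eberlein_exists A (chi k) f <-> exists x, eberlein_exists_at A (chi k) f x) /\
  (forall c, is_FB_coeff A f k c ->
     forall x, is_eberlein_at A (chi k) f x (chi k x * c)).
Proof.
have [cA _] := hA.
have key : forall x n, avg (A n) (fun t => chi k (x - t) * f t) =
    chi k x * avg (A n) (fun t => e2pi (- dotp k t) * f t).
  move=> x n; rewrite -avg_scale //; congr avg; apply: funext => t.
  exact: chi_split.
have one_two : forall c, is_FB_coeff A f k c ->
     forall x, is_eberlein_at A (chi k) f x (chi k x * c).
  move=> c hc x; rewrite /is_eberlein_at.
  have -> : (fun n => avg (A n) (fun t => chi k (x - t) * f t)) =
     (fun n => chi k x * avg (A n) (fun t => e2pi (- dotp k t) * f t)).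
    by apply: funext => n; exact: key.
  exact: cvg_cmul.
have three_one : forall x, eberlein_exists_at A (chi k) f x -> FB_coeff_exists A f k.
  move=> x [v hv]; exists ((chi k x)^-1 * v); rewrite /is_FB_coeff.
  have -> : (fun n => avg (A n) (fun t => e2pi (- dotp k t) * f t)) =
     (fun n => (chi k x)^-1 * avg (A n) (fun t => chi k (x - t) * f t)).
    apply: funext => n; rewrite key mulrA mulVf ?mul1r //; exact: e2pi_neq0.
  exact: cvg_cmul.
split; [split|split; [split|]] => //.
- by move=> [c hc] x; exists (chi k x * c); exact: one_two.
- by move=> h; apply: (three_one 0); exact: h.
- by move=> h; exists 0; exact: h.
- by move=> [x hx] y; have [c hc] := three_one x hx; exists (chi k y * c); exact: one_two.
Qed.
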